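(* Let $k$ be a field of characteristic zero, let $n\ge 1$, and let $R$ denote either $k[x_1,\ldots,x_n]$ or $k[[x_1,\ldots,x_n]]$. Let $\mathfrak{D}$ be a set of pairwise commuting $k$-derivations of $R$ such that $R$ is $\mathfrak{D}$-simple and $\partial_{x_1},\ldots,\partial_{x_{n-1}}\in\mathfrak{D}$. Then there exist $d\in\mathfrak{D}$ and elements $f_1,\ldots,f_n\in R$ such that $d(f_n)=1$ and $d(f_i)=0$ for all $i=1,\ldots,n-1$, and such that $R$ is $\{\partial_{x_1},\ldots,\partial_{x_{n-1}},d\}$-simple.
   Context: A $k$-derivation of $R$ is a $k$-linear map satisfying the Leibniz rule. For a family $\mathfrak{D}$ of $k$-derivations, an ideal $I$ is $\mathfrak{D}$-stable if $d(I)\subseteq I$ for all $d\in\mathfrak{D}$, and $R$ is $\mathfrak{D}$-simple if $0$ and $R$ are its only $\mathfrak{D}$-stable ideals. *)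

(* Defs.v *)
From HB Require Import structures.
From mathcomp Require Import all_boot all_order all_algebra.
From mathcomp Require Import mpoly.
Set Implicit Arguments. Unset Strict Implicit. Unset Printing Implicit Defensive.
Import Order.TTheory GRing.Theory Num.Theory.
Local Open Scope ring_scope.

Section Generic.
Variables (k : fieldType) (T : Type).
Variables (addT mulT : T -> T -> T) (zeroT : T) (scaleT : k -> T -> T).

Definition is_kderivation (d : T -> T) : Prop :=
  [/\ forall a b, d (addT a b) = addT (d a) (d b),
      forall (c : k) a, d (scaleT c a) = scaleT c (d a)
    & forall a b, d (mulT a b) = addT (mulT a (d b)) (mulT (d a) b)].

(* an ideal of the (commutative) ring T; closure under multiplication by
   the ring element -1 gives closure under negation *)
Definition is_ideal (I : T -> Prop) : Prop :=
  [/\ I zeroT,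
      forall a b, I a -> I b -> I (addT a b)
    & forall r a, I a -> I (mulT r a)].

Definition D_stable (D : (T -> T) -> Prop) (I : T -> Prop) : Prop :=
  forall d, D d -> forall a, I a -> I (d a).

Definition D_simple (D : (T -> T) -> Prop) : Prop :=
  forall I, is_ideal I -> D_stable D I ->
    (forall a, I a <-> a = zeroT) \/ (forall a, I a).

(* The conclusion of Corollary 2.5 for the ring T in n variables, whose
   partial derivatives d/dx_{i+1} are [partial i] for i : 'I_n. *)
Definition corollary2p5_prop (n : nat) (oneT : T) (partial : 'I_n -> T -> T)
  : Prop :=
  forall D : (T -> T) -> Prop,
    (forall d, D d -> is_kderivation d) ->
    (forall d e, D d -> D e -> forall a, d (e a) = e (d a)) ->
    D_simple D ->
    (forall i : 'I_n, (i < n.-1)%N -> D (partial i)) ->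
    exists d, D d /\
      exists f : 'I_n -> T,
        [/\ forall i : 'I_n, (i == n.-1 :> nat) -> d (f i) = oneT,
            forall i : 'I_n, (i < n.-1)%N -> d (f i) = zeroT
          & D_simple (fun e => (exists2 i : 'I_n, (i < n.-1)%N & e = partial i)
                               \/ e = d)].
End Generic.

Section PowerSeries.
Variables (k : fieldType) (n : nat).

Definition pseries := 'X_{1..n} -> k.

Definition ps_add (f g : pseries) : pseries := fun m => f m + g m.
Definition ps_zero : pseries := fun _ => 0.
Definition ps_one : pseries := fun m => if m == 0%MM then 1 else 0.
Definition ps_scale (c : k) (f : pseries) : pseries := fun m => c * f m.
(* (f g)_m = sum_{a <= m} f_a g_{m-a} ; every a <= m has degree <= mdeg m *)
Definition ps_mul (f g : pseries) : pseries := fun m =>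
  \sum_(a : 'X_{1..n < (mdeg m).+1} | (val a <= m)%MM)
     f (val a) * g (m - val a)%MM.
Definition ps_deriv (i : 'I_n) (f : pseries) : pseries :=
  fun m => (m i).+1%:R * f (m + U_(i))%MM.
End PowerSeries.

(* Main.v *)
Require Import Defs.
From HB Require Import structures.
From mathcomp Require Import all_boot all_order all_algebra.
From mathcomp Require Import mpoly.
From Stdlib Require Import Classical ClassicalEpsilon FunctionalExtensionality.
From mathcomp Require Import zify.
Set Implicit Arguments. Unset Strict Implicit. Unset Printing Implicit Defensive.
Import Order.TTheory GRing.Theory Num.Theory.
Local Open Scope ring_scope.

Section Gen.
Variables (k : fieldType) (R : comAlgType k) (n : nat).
Variables (p : 'I_n -> R -> R) (x : 'I_n -> R) (l : 'I_n).
Hypothesis hl : val l = n.-1.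
Notation isder := (is_kderivation (@GRing.add R) (@GRing.mul R) (@GRing.scale k R)).
Hypothesis Hpd : forall i, isder (p i).
Hypothesis Hpx : forall i j, p i (x j) = (i == j)%:R.
Hypothesis Hdet : forall d, isder d -> (forall j, d (x j) = 0) -> forall r, d r = 0.
Hypothesis Hnu : forall r, x l * r != 1.
Hypothesis Hanti : forall v a, v * a = 1 -> (forall j : 'I_n, (j < n.-1)%N -> p j v = 0) ->
  exists f, p l f = v /\ forall j : 'I_n, (j < n.-1)%N -> p j f = 0.
Hypothesis Hsimp : forall I, is_ideal (@GRing.add R) (@GRing.mul R) 0 I ->
  (forall i r, I r -> I (p i r)) -> forall r, I r -> r != 0 -> I 1.

Lemma der0 d : isder d -> d 0 = 0.
Proof.
case=> dA _ _; have h := dA 0 0; rewrite addr0 in h.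
by apply: (addrI (d 0)); rewrite addr0 -h.
Qed.

Lemma der1 d : isder d -> d 1 = 0.
Proof.
case=> _ _ dM; have h := dM 1 1; rewrite !mul1r !mulr1 in h.
by apply: (addrI (d 1)); rewrite addr0 -h.
Qed.

Lemma derN d : isder d -> forall a, d (- a) = - d a.
Proof.
move=> Hd a; have [dA _ _] := Hd; apply/eqP; rewrite -subr_eq0 opprK.
by rewrite -dA addNr der0.
Qed.

Lemma dersum d : isder d -> forall (I : Type) (r : seq I) (P : pred I) (F : I -> R),
  d (\sum_(i <- r | P i) F i) = \sum_(i <- r | P i) d (F i).
Proof.
move=> Hd I r P F; have [dA _ _] := Hd.
elim/big_rec2: _ => [|i y1 y2 _ <-]; first exact: der0.
by rewrite dA.
Qed.

Lemma derb d : isder d -> forall b : bool, d b%:R = 0.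
Proof. by move=> Hd [|]; [exact: der1 | exact: der0]. Qed.

Lemma DET d : isder d -> forall r, d r = \sum_j d (x j) * p j r.
Proof.
move=> Hd r; have [dA dZ dM] := Hd.
pose del := fun r => d r - \sum_j d (x j) * p j r.
suff : del r = 0 by move/eqP; rewrite subr_eq0 => /eqP.
apply: Hdet.
- split.
  + move=> a b; rewrite /del dA.
    have -> : \sum_j d (x j) * p j (a + b) =
       \sum_j d (x j) * p j a + \sum_j d (x j) * p j b.
      by rewrite -big_split; apply: eq_bigr => j _; have [pA _ _] := Hpd j; rewrite pA mulrDr.
    by rewrite opprD addrACA.
  + move=> c a; rewrite /del dZ scalerBr; congr (_ - _).
    rewrite scaler_sumr; apply: eq_bigr => j _; have [_ pZ _] := Hpd j.
    by rewrite pZ scalerAr.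
  + move=> a b; rewrite /del dM.
    have -> : \sum_j d (x j) * p j (a * b) =
       a * \sum_j d (x j) * p j b + (\sum_j d (x j) * p j a) * b.
      rewrite mulr_sumr mulr_suml -big_split; apply: eq_bigr => j _.
      have [_ _ pM] := Hpd j; rewrite pM mulrDr; congr (_ + _).
      * by rewrite mulrCA.
      * by rewrite mulrA.
    by rewrite mulrBr mulrBl opprD addrACA.
- move=> j; rewrite /del (bigD1 j) //= Hpx eqxx mulr1 big1 ?addr0 ?subrr //.
  by move=> i /negbTE ne; rewrite Hpx ne mulr0.
Qed.

Lemma idx_split (j : 'I_n) : (j < n.-1)%N \/ j = l.
Proof.
case: (ltnP j n.-1) => h; [by left|right].
apply: val_inj; rewrite /= hl; apply/eqP; rewrite eqn_leq h andbT.
by rewrite -ltnS (ltn_predK (ltn_ord j)).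
Qed.

Lemma lt_ne (j : 'I_n) : (j < n.-1)%N -> j != l.
Proof. by move=> h; apply/eqP => e; move: h; rewrite e hl ltnn. Qed.

Theorem gen_thm : corollary2p5_prop (@GRing.add R) (@GRing.mul R) 0
  (@GRing.scale k R) 1 p.
Proof.
move=> D HD Hc Hs Hp.
have Kf : forall d, D d -> forall (i : 'I_n) j, (i < n.-1)%N -> p i (d (x j)) = 0.
  move=> d Dd i j hi; rewrite -Hc ?Hpx ?derb //; [exact: HD | exact: Hp].
have pN : forall d e, D d -> D e -> e (d (x l)) = d (x l) * p l (e (x l)).
  move=> d e Dd De; rewrite -(Hc d e Dd De) (DET (HD _ Dd)) (bigD1 l) //= big1 ?addr0 //.
  move=> j /negbTE ne; case: (idx_split j) => [h|e']; last by rewrite e' eqxx in ne.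
  by rewrite Kf // mulr0.
have [d [Dd [v Hv]]] : exists d, D d /\ exists v, v * d (x l) = 1.
  case: (classic (exists d, D d /\ d (x l) != 0)) => [[d [Dd nz]]|none].
    exists d; split => //.
    pose a := d (x l).
    pose I := fun r => exists s, r = s * a.
    have II : is_ideal (@GRing.add R) (@GRing.mul R) 0 I.
      split.
      - by exists 0; rewrite mul0r.
      - by move=> _ _ [s1 ->] [s2 ->]; exists (s1 + s2); rewrite mulrDl.
      - by move=> r _ [s ->]; exists (r * s); rewrite mulrA.
    have IS : D_stable D I.
      move=> e De _ [s ->]; have [_ _ eM] := HD _ De.
      rewrite eM pN //; exists (s * p l (e (x l)) + e s).
      by rewrite mulrDl [a * _]mulrC mulrA.
    case: (Hs I II IS) => [h|h].
      have : I a by exists 1; rewrite mul1r.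
      by move/h => a0; move: nz; rewrite -/a a0 eqxx.
    by have [s hs] := h 1; exists s; rewrite hs.
  exfalso.
  have z : forall d, D d -> d (x l) = 0.
    move=> d Dd; apply: NNPP => nz; apply: none; exists d; split => //.
    by apply/eqP.
  pose I := fun r => exists s, r = s * x l.
  have II : is_ideal (@GRing.add R) (@GRing.mul R) 0 I.
    split.
    - by exists 0; rewrite mul0r.
    - by move=> _ _ [s1 ->] [s2 ->]; exists (s1 + s2); rewrite mulrDl.
    - by move=> r _ [s ->]; exists (r * s); rewrite mulrA.
  have IS : D_stable D I.
    move=> e De _ [s ->]; have [_ _ eM] := HD _ De.
    by rewrite eM z // mulr0 add0r; exists (e s).
  case: (Hs I II IS) => [h|h].
    have : I (x l) by exists 1; rewrite mul1r.
    move/h => x0; have := Hpx l l; rewrite x0 der0 // eqxx => /eqP.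
    by rewrite eq_sym oner_eq0.
  have [s hs] := h 1; have := Hnu s; by rewrite mulrC -hs eqxx.
set a := d (x l) in Hv.
have Kv : forall j : 'I_n, (j < n.-1)%N -> p j v = 0.
  move=> j hj; have [_ _ pM] := Hpd j.
  have := pM v a; rewrite Hv der1 // Kf // mulr0 add0r => /esym h.
  by rewrite -[p j v]mulr1 -Hv mulrA mulrAC h mul0r.
have [f [Hf1 Hf2]] := Hanti Hv Kv.
have dfe : d f = 1.
  rewrite (DET (HD _ Dd)) (bigD1 l) //= big1 ?addr0 ?Hf1 1?mulrC //.
  move=> j /negbTE ne; case: (idx_split j) => [h|e']; last by rewrite e' eqxx in ne.
  by rewrite Hf2 // mulr0.
exists d; split => //.
exists (fun i => if i == l then f else 0); split.
- move=> i hi; have -> : i = l by apply: val_inj; rewrite /= hl; apply/eqP.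
  by rewrite eqxx.
- by move=> i hi; rewrite (negbTE (lt_ne hi)) der0 //; exact: HD.
move=> I II Hst; have [I0 IA IM] := II.
case: (classic (exists r, I r /\ r != 0)) => [[r0 [Ir0 nz0]]|none]; last first.
  left => a0; split; last by move=> ->.
  by move=> Ia; apply: NNPP => ne; apply: none; exists a0; split => //; apply/eqP.
right.
have IN : forall r, I r -> I (- r).
  by move=> r Ir; rewrite -mulN1r; exact: IM.
have Isum : forall (F : 'I_n -> R) (P : pred 'I_n), (forall j, P j -> I (F j)) ->
    I (\sum_(j | P j) F j).
  by move=> F P HF; elim/big_ind: _ => //; exact: IA.
have Hall : forall i r, I r -> I (p i r).
  move=> i r Ir; case: (idx_split i) => [hi|->].
    by apply: (Hst (p i)) => //; left; exists i.
  have -> : p l r = v * d r - \sum_(j | j != l) (v * d (x j)) * p j r.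
    rewrite (DET (HD _ Dd)) (bigD1 l) //= mulrDr mulrA Hv mul1r mulr_sumr.
    rewrite (eq_bigr (fun j => v * d (x j) * p j r)) ?addrK // => j _.
    exact: mulrA.
  apply: IA; first by apply: IM; apply: (Hst d) => //; right.
  apply: IN; apply: Isum => j ne; apply: IM.
  case: (idx_split j) => [hj|e']; last by rewrite e' eqxx in ne.
  by apply: (Hst (p j)) => //; left; exists j.
have I1 := Hsimp II Hall Ir0 nz0.
by move=> a0; rewrite -[a0]mulr1; exact: IM.
Qed.
End Gen.

Section MP.
Variables (k : fieldType) (n : nat).
Hypothesis hk : [pchar k] =i pred0.
Notation MR := {mpoly k[n]}.
Notation isder := (is_kderivation (@GRing.add MR) (@GRing.mul MR) (@GRing.scale k MR)).


Lemma mp_der i : isder (fun p => mderiv i p).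
Proof.
split.
- by move=> a b; rewrite mderivD.
- by move=> c a; rewrite mderivZ.
- by move=> a b; rewrite mderivM addrC.
Qed.

Lemma mp_px (i j : 'I_n) : mderiv i 'X_j = (i == j)%:R :> MR.
Proof.
rewrite mderivX mnm1E eq_sym; case: eqP => [->|_].
  have -> : (U_(j) - U_(j))%MM = 0%MM.
    by apply/mnmP => t; rewrite mnmBE subnn !mnmE.
  by rewrite mpolyX0 scale1r.
by rewrite scale0r.
Qed.

Lemma mp_det d : isder d -> (forall j, d 'X_j = 0) -> forall r : MR, d r = 0.
Proof.
move=> Hd Hx; have [dA dZ dM] := Hd.
have HM : forall a b, d a = 0 -> d b = 0 -> d (a * b) = 0.
  by move=> a b ha hb; rewrite dM ha hb mulr0 mul0r addr0.
have HX : forall m, d 'X_[m] = 0.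
  move=> m; rewrite mpolyXE_id.
  elim/big_rec: _ => [|i y _ hy]; first exact: der1.
  apply: (HM) => //; elim: (m i) => [|e IHe]; first by rewrite expr0 der1.
  by rewrite exprS; apply: (HM).
elim/mpolyind => [|c m p _ _ IH]; first exact: der0.
by rewrite dA dZ IH HX scaler0 addr0.
Qed.

Lemma mp_nu (l : 'I_n) (r : MR) : 'X_l * r != 1.
Proof.
apply/eqP => h; have := congr1 (meval (fun _ => 0 : k)) h.
by rewrite mevalM mevalXU mul0r meval1 => /eqP; rewrite eq_sym oner_eq0.
Qed.

Lemma mp_anti (l : 'I_n) (hl : val l = n.-1) (v a : MR) : v * a = 1 ->
  exists f, mderiv l f = v /\ forall j : 'I_n, (j < n.-1)%N -> mderiv j f = 0.
Proof.
move=> h.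
have vnz : v != 0 by apply/eqP => v0; move: h; rewrite v0 mul0r => /eqP; rewrite eq_sym oner_eq0.
have anz : a != 0 by apply/eqP => a0; move: h; rewrite a0 mulr0 => /eqP; rewrite eq_sym oner_eq0.
have hs := msizeM vnz anz; rewrite h msize1 in hs.
have ha : (0 < msize a)%N by rewrite lt0n msize_poly_eq0.
have hv : (msize v <= 1)%N.
  move: hs ha; case: (msize v) => [|[|u]] //=; case: (msize a) => // b.
  by rewrite addSn addnS => /eqP.
rewrite (msize1_polyC hv).
exists ((v@_0)%:MP * 'X_l); split.
- by rewrite mderivM mderivC mul0r add0r mp_px eqxx mulr1.
- move=> j hj; rewrite mderivM mderivC mul0r add0r mp_px.
  case: eqP => [e|_]; last by rewrite mulr0.
  by move: hj; rewrite e hl ltnn.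
Qed.

Lemma natf_neq0 (c : k) e : c != 0 -> c *+ e.+1 != 0.
Proof.
move=> hc; rewrite -mulr_natr mulf_neq0 //.
by rewrite ((pcharf0P k).1 hk).
Qed.

Lemma mp_exists_coef (r : MR) : r != 0 -> exists m, r@_m != 0.
Proof.
move=> nz; apply: NNPP => h; move/eqP: nz; apply; apply/mpolyP => m.
rewrite mcoeff0; apply: NNPP => ne; apply: h; exists m; exact/eqP.
Qed.

Lemma mp_simp I : is_ideal (@GRing.add MR) (@GRing.mul MR) 0 I ->
  (forall i r, I r -> I (mderiv i r)) -> forall r, I r -> r != 0 -> I 1.
Proof.
move=> [I0 IA IM] Id.
suff H : forall N r, I r -> r != 0 -> (forall m, r@_m != 0 -> (mdeg m < N)%N) -> I 1.
  move=> r Ir nz; apply: (H (msize r) r) => // m hm.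
  by apply: msize_mdeg_lt; rewrite mcoeff_msupp.
elim=> [|N IH] r Ir nz hb.
  by have [m hm] := mp_exists_coef nz; have := hb m hm.
case: (classic (exists m, r@_m != 0 /\ m != 0%MM)) => [[m [hm mnz]]|none].
  have [i hi] : exists i, m i != 0%N.
    apply: NNPP => h; move: mnz; rewrite -mdeg_eq0 mdegE big1 //.
    by move=> i _; apply: NNPP => e; apply: h; exists i; apply/eqP.
  have le1 : (U_(i) <= m)%MM by rewrite lep1mP.
  apply: (IH (mderiv i r)); first exact: Id.
  - apply/eqP => e; have := congr1 (mcoeff (m - U_(i))%MM) e.
    rewrite mcoeff_mderiv submK // mcoeff0 => h.
    by move: (natf_neq0 ((m - U_(i))%MM i) hm); rewrite h eqxx.
  - move=> m' hm'; rewrite mcoeff_mderiv in hm'.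
    have hr : r@_(m' + U_(i)) != 0.
      by apply/eqP => e; move: hm'; rewrite e mul0rn eqxx.
    by have := hb _ hr; rewrite mdegD mdeg1 addn1 ltnS.
have rc : r = (r@_0)%:MP.
  apply/mpolyP => m; rewrite mcoeffC; case: eqP => [->|ne]; first by rewrite mulr1.
  rewrite mulr0; apply: NNPP => h; apply: none; exists m; split; first exact/eqP.
  exact/eqP.
have c0 : r@_0 != 0 by apply/eqP => e; move: nz; rewrite rc e mpolyC0 eqxx.
have := IM ((r@_0)^-1)%:MP r Ir.
by rewrite {2}rc -mpolyCM mulVf // mpolyC1.
Qed.

Lemma mp_main : (1 <= n)%N ->
  corollary2p5_prop (@GRing.add MR) (@GRing.mul MR)
    0 (@GRing.scale k MR) 1 (fun i p => mderiv i p).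
Proof.
move=> n1; have hl : (n.-1 < n)%N by rewrite prednK.
pose l := Ordinal hl.
apply: (@gen_thm k MR n (fun i p => mderiv i p) (fun j => 'X_j) l) => //.
- exact: mp_der.
- exact: mp_px.
- exact: mp_det.
- exact: mp_nu.
- by move=> v a h _; apply: (mp_anti (l := l)) h.
- exact: mp_simp.
Qed.
End MP.

Section PSdef.
Variables (k : fieldType) (n : nat).
Definition PS := pseries k n.
Definition ps_eqb (f g : PS) : bool :=
  if excluded_middle_informative (f = g) then true else false.
Lemma ps_eqP : Equality.axiom ps_eqb.
Proof. by move=> f g; rewrite /ps_eqb; case: excluded_middle_informative => h; constructor. Qed.
HB.instance Definition _ := hasDecEq.Build PS ps_eqP.

Definition ps_find (P : pred PS) (_ : nat) : option PS :=
  match excluded_middle_informative (exists x, P x) with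
  | left h => Some (proj1_sig (constructive_indefinite_description _ h))
  | right _ => None end.
Lemma ps_find1 P m x : ps_find P m = Some x -> P x.
Proof.
rewrite /ps_find; case: excluded_middle_informative => // h [<-].
exact: (proj2_sig (constructive_indefinite_description _ h)).
Qed.
Lemma ps_find2 (P : pred PS) : (exists x, P x) -> exists m, ps_find P m.
Proof. by move=> h; exists 0%N; rewrite /ps_find; case: excluded_middle_informative. Qed.
Lemma ps_find3 (P Q : pred PS) : P =1 Q -> ps_find P =1 ps_find Q.
Proof. by move=> h; rewrite (functional_extensionality P Q h). Qed.
HB.instance Definition _ := hasChoice.Build PS ps_find1 ps_find2 ps_find3.
Notation funext := functional_extensionality.

Definition ps_opp (f : PS) : PS := fun m => - f m.

Lemma ps_addA : associative (@ps_add k n).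
Proof. by move=> f g h; apply: funext => m; rewrite /ps_add addrA. Qed.
Lemma ps_addC : commutative (@ps_add k n).
Proof. by move=> f g; apply: funext => m; rewrite /ps_add addrC. Qed.
Lemma ps_add0 : left_id (@ps_zero k n) (@ps_add k n).
Proof. by move=> f; apply: funext => m; rewrite /ps_add /ps_zero add0r. Qed.
Lemma ps_addN : left_inverse (@ps_zero k n) ps_opp (@ps_add k n).
Proof. by move=> f; apply: funext => m; rewrite /ps_add /ps_opp /ps_zero addNr. Qed.

HB.instance Definition _ := GRing.isZmodule.Build PS ps_addA ps_addC ps_add0 ps_addN.

Definition agree (N : nat) (P : {mpoly k[n]}) (f : PS) :=
  forall a, (mdeg a < N)%N -> P@_a = f a.

Definition tr (N : nat) (f : PS) : {mpoly k[n]} :=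
  \sum_(a : 'X_{1..n < N}) f a *: 'X_[a].

Lemma trE N f m : (tr N f)@_m = if (mdeg m < N)%N then f m else 0.
Proof.
rewrite /tr raddf_sum /=.
under eq_bigr do rewrite mcoeffZ mcoeffX.
case: ifP => hm.
  rewrite (bigD1 (BMultinom hm)) //= eqxx mulr1 big1 ?addr0 // => a ne.
  case: eqP => [e|]; last by rewrite mulr0.
  have ea : a = BMultinom hm by apply: val_inj.
  by move: ne; rewrite ea eqxx.
rewrite big1 // => a _; case: eqP => [e|]; last by rewrite mulr0.
by move: hm; rewrite -e bmdeg.
Qed.

Lemma agree_tr N f : agree N (tr N f) f.
Proof. by move=> a ha; rewrite trE ha. Qed.
Arguments agree_tr : clear implicits.
Arguments agree_tr N f : clear implicits.

Lemma mdeg_le (a m : 'X_{1..n}) : (a <= m)%MM -> (mdeg a <= mdeg m)%N.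
Proof. by move=> h; rewrite -(submK h) mdegD leq_addl. Qed.

Lemma agree_mul N P Q f g : agree N P f -> agree N Q g -> agree N (P * Q) (ps_mul f g).
Proof.
move=> hP hQ m hm.
have -> : mcoeff m (P * Q) = mcoeff m (mpoly_mul P Q) by [].
rewrite (@mcoeff_poly_mul_lin _ _ _ _ _ (mdeg m).+1) // /ps_mul.
apply: eq_bigr => a ham; rewrite hP ?hQ //.
- by rewrite (leq_ltn_trans _ hm) // mdegB.
- by rewrite (leq_ltn_trans _ hm) // mdeg_le.
Qed.

Lemma agree_add N P Q f g : agree N P f -> agree N Q g -> agree N (P + Q) (ps_add f g).
Proof. by move=> hP hQ m hm; rewrite mcoeffD hP ?hQ. Qed.

Lemma agree_scale N P c f : agree N P f -> agree N (c *: P) (ps_scale c f).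
Proof. by move=> hP m hm; rewrite mcoeffZ hP. Qed.

Lemma agree_one N : agree N 1 (@ps_one k n).
Proof. by move=> m _; rewrite mcoeff1 /ps_one; case: eqP. Qed.
Arguments agree_one N : clear implicits.

Lemma agree_ext N P Q f g m : agree N P f -> agree N Q g -> P = Q -> (mdeg m < N)%N -> f m = g m.
Proof. by move=> hP hQ e hm; rewrite -hP // -hQ // e. Qed.

Lemma ps_mulA : associative (@ps_mul k n).
Proof.
move=> f g h; apply: funext => m; pose N := (mdeg m).+1.
have h1 := (agree_mul (agree_tr N f) (agree_mul (agree_tr N g) (agree_tr N h))).
have h2 := (agree_mul (agree_mul (agree_tr N f) (agree_tr N g)) (agree_tr N h)).
by rewrite -(h1 m (ltnSn _)) -(h2 m (ltnSn _)) mulrA.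
Qed.

Lemma ps_mulC : commutative (@ps_mul k n).
Proof.
move=> f g; apply: funext => m; pose N := (mdeg m).+1.
have h1 := (agree_mul (agree_tr N f) (agree_tr N g)).
have h2 := (agree_mul (agree_tr N g) (agree_tr N f)).
by rewrite -(h1 m (ltnSn _)) -(h2 m (ltnSn _)) mulrC.
Qed.

Lemma ps_mul1 : left_id (@ps_one k n) (@ps_mul k n).
Proof.
move=> f; apply: funext => m; pose N := (mdeg m).+1.
have h1 := (agree_mul (agree_one N) (agree_tr N f)).
have h2 := (agree_tr N f).
by rewrite -(h1 m (ltnSn _)) -(h2 m (ltnSn _)) mul1r.
Qed.

Lemma ps_mulDl : left_distributive (@ps_mul k n) (@ps_add k n).
Proof.
move=> f g h; apply: funext => m; pose N := (mdeg m).+1.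
have h1 := (agree_mul (agree_add (agree_tr N f) (agree_tr N g)) (agree_tr N h)).
have h2 := (agree_add (agree_mul (agree_tr N f) (agree_tr N h)) (agree_mul (agree_tr N g) (agree_tr N h))).
by rewrite -(h1 m (ltnSn _)) -(h2 m (ltnSn _)) mulrDl.
Qed.

Lemma ps_one_neq0 : (@ps_one k n : PS) != 0.
Proof.
apply/eqP => h; have := congr1 (fun f : PS => f 0%MM) h.
rewrite /ps_one eqxx => e.
by have := oner_neq0 k; rewrite [X in X != _]e eqxx.
Qed.

HB.instance Definition _ := GRing.Zmodule_isComNzRing.Build PS ps_mulA ps_mulC ps_mul1 ps_mulDl ps_one_neq0.

Lemma ps_scaleA a b (v : PS) : ps_scale a (ps_scale b v) = ps_scale (a * b) v.
Proof. by apply: funext => m; rewrite /ps_scale mulrA. Qed.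
Lemma ps_scale1 : left_id 1 (@ps_scale k n).
Proof. by move=> v; apply: funext => m; rewrite /ps_scale mul1r. Qed.
Lemma ps_scaleDr : right_distributive (@ps_scale k n) (@ps_add k n).
Proof. by move=> a u v; apply: funext => m; rewrite /ps_scale /ps_add mulrDr. Qed.
Lemma ps_scaleDl (v : PS) : {morph (@ps_scale k n)^~ v : a b / a + b >-> ps_add a b}.
Proof. by move=> a b; apply: funext => m; rewrite /ps_scale /ps_add mulrDl. Qed.

HB.instance Definition _ := GRing.Zmodule_isLmodule.Build k PS ps_scaleA ps_scale1 ps_scaleDr ps_scaleDl.

Lemma ps_scaleAl (a : k) (u v : PS) : a *: (u * v) = (a *: u) * v.
Proof.
change (ps_scale a (ps_mul u v) = ps_mul (ps_scale a u) v).
apply: funext => m; rewrite /ps_scale /ps_mul.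
by rewrite mulr_sumr; apply: eq_bigr => b _; rewrite mulrA.
Qed.

HB.instance Definition _ := GRing.Lmodule_isLalgebra.Build k PS ps_scaleAl.
HB.instance Definition _ := GRing.Lalgebra_isComAlgebra.Build k PS.

End PSdef.
Arguments agree_tr {k n} N f.
Arguments agree_one {k n} N.

Section PSth.
Variables (k : fieldType) (n : nat).
Hypothesis hk : [pchar k] =i pred0.
Notation R := (PS k n).
Notation MR := {mpoly k[n]}.
Notation isder := (is_kderivation (@GRing.add R) (@GRing.mul R) (@GRing.scale k R)).
Notation funext := functional_extensionality.

Lemma psE_sum (I : Type) (r : seq I) (P : pred I) (F : I -> R) m :
  (\sum_(i <- r | P i) F i) m = \sum_(i <- r | P i) F i m.
Proof. by elim/big_rec2: _ => // i y1 y2 _ <-. Qed.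

Lemma psmulE (f g : R) a : (f * g) a =
  \sum_(b : 'X_{1..n < (mdeg a).+1} | (b <= a)%MM) f b * g (a - b)%MM.
Proof. by []. Qed.

Definition emb (P : MR) : R := fun m => P@_m.

Lemma agree_emb N P : agree N P (emb P).
Proof. by []. Qed.
Arguments agree_emb N P : clear implicits.

Lemma emb_mul P Q : emb (P * Q) = emb P * emb Q.
Proof.
apply: funext => m.
exact: (agree_mul (agree_emb (mdeg m).+1 P) (agree_emb (mdeg m).+1 Q) (ltnSn _)).
Qed.

Lemma emb_nat (b : bool) : emb b%:R = b%:R.
Proof.
case: b; apply: funext => m /=; rewrite /emb.
  by rewrite mcoeff1; change ((m == 0%MM)%:R = @ps_one k n m); rewrite /ps_one; case: eqP.
by rewrite mcoeff0.
Qed.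

Lemma emb_der i P : ps_deriv i (emb P) = emb (mderiv i P).
Proof. by apply: funext => m; rewrite /ps_deriv /emb mcoeff_mderiv mulr_natl. Qed.

Lemma agree_weak N M (P : MR) (f : R) : (N <= M)%N -> agree M P f -> agree N P f.
Proof. by move=> h hP a ha; apply: hP; exact: leq_trans ha h. Qed.

Lemma agree_der N i (P : MR) (f : R) : agree N.+1 P f -> agree N (mderiv i P) (ps_deriv i f).
Proof.
move=> hP m hm; rewrite mcoeff_mderiv /ps_deriv hP ?mulr_natl //.
by rewrite mdegD mdeg1 addn1 ltnS.
Qed.

Lemma ps_der i : isder (ps_deriv i).
Proof.
split.
- by move=> a b; apply: funext => m; rewrite /ps_deriv /= /ps_add mulrDr.
- by move=> c a; apply: funext => m; rewrite /ps_deriv /= /ps_scale mulrCA.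
move=> u v; apply: funext => m; pose N := (mdeg m).+1.
have hu := agree_tr N.+1 u; have hv := agree_tr N.+1 v.
have h1 := agree_der i (agree_mul hu hv).
have h2 := agree_add (agree_mul (agree_weak (leqnSn _) hu) (agree_der i hv))
                     (agree_mul (agree_der i hu) (agree_weak (leqnSn _) hv)).
have e1 := h1 m (ltnSn _); have e2 := h2 m (ltnSn _).
rewrite mderivM addrC in e1; exact: (etrans (esym e1) e2).
Qed.

Lemma ps_px i j : ps_deriv i (emb 'X_j) = (i == j)%:R :> R.
Proof. by rewrite emb_der mp_px emb_nat. Qed.

Lemma xmul j (g : R) m :
  (emb 'X_j * g) m = if (U_(j) <= m)%MM then g (m - U_(j))%MM else 0.
Proof.
rewrite psmulE /emb.
under eq_bigr do rewrite mcoeffX.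
case: ifP => h.
  have hb : (mdeg U_(j) < (mdeg m).+1)%N by rewrite ltnS (mdeg_le h).
  rewrite (bigD1 (BMultinom hb)) //= eqxx mul1r big1 ?addr0 // => b /andP [_ ne].
  case: eqP => [e|_]; last by rewrite mul0r.
  have eb : b = BMultinom hb by apply: val_inj; rewrite /= e.
  by move: ne; rewrite eb eqxx.
rewrite big1 // => b hb; case: eqP => [e|_]; last by rewrite mul0r.
by move: hb h; rewrite -e => ->.
Qed.

Lemma ps_nu l (r : R) : emb 'X_l * r != 1.
Proof.
apply/eqP => h; have := congr1 (fun f : R => f 0%MM) h; rewrite /= xmul.
have -> : (U_(l) <= 0)%MM = false by rewrite lep1mP mnmE.
change (0 = @ps_one k n 0%MM -> False); rewrite /ps_one eqxx => e.
by have := oner_neq0 k; rewrite -e eqxx.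
Qed.

Definition eul (s : R) (j : 'I_n) : R :=
  fun m => ((m j).+1%:R / (mdeg m).+1%:R) * s (m + U_(j))%MM.

Lemma euler (s : R) : s = s 0%MM *: 1 + \sum_j emb 'X_j * eul s j.
Proof.
apply: funext => m.
have -> : (s 0%MM *: 1 + \sum_j emb 'X_j * eul s j) m =
   s 0%MM * @ps_one k n m + \sum_j (emb 'X_j * eul s j) m
  by rewrite -(psE_sum _ _ (fun j => emb 'X_j * eul s j)).
have key : forall j, (emb 'X_j * eul s j) m = (m j)%:R / (mdeg m)%:R * s m.
  move=> j; rewrite xmul; case: ifP => h.
    have hmj : ((m - U_(j))%MM j).+1 = m j.
      rewrite mnmBE mnm1E eqxx subn1 prednK // lt0n.
      by rewrite -lep1mP.
    have hd : (mdeg (m - U_(j))%MM).+1 = mdeg m.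
      by rewrite -{2}(submK h) mdegD mdeg1 addn1.
    by rewrite /eul submK // hmj hd.
  by move: h; rewrite lep1mP => /negbFE /eqP ->; rewrite !mul0r.
rewrite (eq_bigr _ (fun j _ => key j)) -!mulr_suml -natr_sum -mdegE.
case: (eqVneq m 0%MM) => [->|nz].
  by rewrite mdeg0 !mul0r addr0 /ps_one eqxx mulr1.
rewrite /ps_one (negbTE nz) mulr0 add0r divff ?mul1r //.
by rewrite ((pcharf0P k).1 hk) mdeg_eq0.
Qed.

Lemma ps_det d : isder d -> (forall j, d (emb 'X_j) = 0) -> forall r, d r = 0.
Proof.
move=> Hd Hx; have [dA dZ dM] := Hd.
have dec : forall s, d s = \sum_j emb 'X_j * d (eul s j).
  move=> s; rewrite {1}(euler s) dA dZ der1 // scaler0 add0r dersum //.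
  by apply: eq_bigr => j _; rewrite dM Hx mul0r addr0.
suff H : forall N s m, (mdeg m < N)%N -> d s m = 0.
  move=> r; apply: funext => m; exact: (H _ r m (ltnSn _)).
elim=> [|N IH] s m hm //.
rewrite dec psE_sum big1 // => j _; rewrite xmul; case: ifP => h //.
apply: IH; move: hm; rewrite -{1}(submK h) mdegD mdeg1 addn1 ltnS; exact.
Qed.

Lemma natk_neq0 e : (e.+1%:R : k) != 0.
Proof. by rewrite ((pcharf0P k).1 hk). Qed.

Lemma ps_anti (l : 'I_n) (hl : val l = n.-1) (v a : R) : v * a = 1 ->
  (forall j : 'I_n, (j < n.-1)%N -> ps_deriv j v = 0 :> R) ->
  exists f, ps_deriv l f = v /\ forall j : 'I_n, (j < n.-1)%N -> ps_deriv j f = 0 :> R.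
Proof.
move=> _ Hv.
pose A : R := fun m => if m l == 0%N then 0 else v (m - U_(l))%MM / (m l)%:R.
exists A; split.
  apply: funext => m; rewrite /ps_deriv /A mnmDE mnm1E eqxx addn1 /= addmK.
  by rewrite mulrCA divff ?mulr1 // natk_neq0.
move=> j hj; have jl : (j == l) = false.
  by apply/negbTE/eqP => e; move: hj; rewrite e hl ltnn.
apply: funext => m; rewrite /ps_deriv /A mnmDE mnm1E jl addn0.
case: eqP => [_|ml]; first by rewrite mulr0.
have := congr1 (fun f : R => f (m - U_(l))%MM) (Hv j hj).
rewrite /ps_deriv /= => /eqP; rewrite mulf_eq0 (negbTE (natk_neq0 _)) /= => /eqP h.
have -> : (m + U_(j) - U_(l))%MM = (m - U_(l) + U_(j))%MM.
  apply/mnmP => t; rewrite !(mnmDE, mnmBE, mnm1E).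
  case: (eqVneq l t) => [<-|ne1]; first by rewrite jl !addn0.
  by rewrite !subn0.
by rewrite h mul0r mulr0.
Qed.

Lemma powvan (h : R) : h 0%MM = 0 -> forall e a, (mdeg a < e)%N -> (h ^+ e) a = 0.
Proof.
move=> h0; elim=> [|e IH] a ha //.
rewrite exprS psmulE big1 // => b hb.
case: (eqVneq (val b) 0%MM) => [->|nz]; first by rewrite h0 mul0r.
rewrite IH ?mulr0 //.
have hs : (mdeg (a - b)%MM + mdeg (val b))%N = mdeg a by rewrite -mdegD submK.
have : mdeg (val b) != 0%N by rewrite mdeg_eq0.
lia.
Qed.

Lemma sum_pow_trunc (h : R) : h 0%MM = 0 -> forall b M, (mdeg b < M)%N ->
  \sum_(e < M) (h ^+ e) b = \sum_(e < (mdeg b).+1) (h ^+ e) b.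
Proof.
move=> h0 b M hM.
rewrite [RHS](big_ord_widen M (fun e => (h ^+ e) b) hM).
rewrite (bigID (fun e : 'I_M => (e < (mdeg b).+1)%N)) /=.
rewrite [X in _ + X = _]big1 ?addr0 // => e; rewrite -leqNgt => he.
by apply: powvan.
Qed.

Lemma ps_unit (u : R) : u 0%MM != 0 -> exists w, w * u = 1.
Proof.
move=> c0; set c := u 0%MM.
pose h : R := 1 - c^-1 *: u.
have h0 : h 0%MM = 0.
  change (@ps_one k n 0%MM - c^-1 * u 0%MM = 0).
  by rewrite /ps_one eqxx mulVf // subrr.
pose w : R := fun m => c^-1 * \sum_(e < (mdeg m).+1) (h ^+ e) m.
exists w; apply: funext => m; pose N := (mdeg m).+1.
pose G := \sum_(e < N) h ^+ e.
have E : (c^-1 *: G) * u = 1 - h ^+ N.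
  have hu : u = c *: (1 - h) by rewrite /h opprB addrC subrK scalerA mulfV // scale1r.
  rewrite hu -scalerAl -scalerAr scalerA mulVf // scale1r.
  have e := subrX1 h N.
  by rewrite mulrC -[1 - h]opprB mulNr -e opprB.
have -> : (w * u) m = ((c^-1 *: G) * u) m.
  rewrite !psmulE; apply: eq_bigr => b hb; congr (_ * _).
  change (c^-1 * \sum_(e < (mdeg b).+1) (h ^+ e) b = c^-1 * G b).
  rewrite /G psE_sum sum_pow_trunc //.
  by rewrite ltnS mdeg_le.
rewrite E.
change (@ps_one k n m - (h ^+ N) m = @ps_one k n m).
by rewrite powvan // subr0.
Qed.

Lemma ps_simp I : is_ideal (@GRing.add R) (@GRing.mul R) 0 I ->
  (forall i r, I r -> I (ps_deriv i r)) -> forall r, I r -> r != 0 -> I 1.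
Proof.
move=> [I0 IA IM] Id.
suff H : forall N s m, I s -> s m != 0 -> mdeg m = N -> I 1.
  move=> r Ir nz.
  have [m hm] : exists m, r m != 0.
    apply: NNPP => h; move/eqP: nz; apply; apply: funext => m.
    by apply: NNPP => e; apply: h; exists m; apply/eqP.
  exact: (H _ r m Ir hm erefl).
elim=> [|N IH] s m Is hm hd.
  have m0 : m = 0%MM by apply/eqP; rewrite -mdeg_eq0 hd.
  rewrite m0 in hm; have [w hw] := ps_unit hm.
  by rewrite -hw; exact: IM.
have [i hi] : exists i, m i != 0%N.
  apply: NNPP => h; move: hd; rewrite mdegE big1 //.
  by move=> i _; apply: NNPP => e; apply: h; exists i; apply/eqP.
have le1 : (U_(i) <= m)%MM by rewrite lep1mP.
apply: (IH (ps_deriv i s) (m - U_(i))%MM); first exact: Id.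
- rewrite /ps_deriv submK // mulf_eq0 negb_or natk_neq0 //.
- by move: hd; rewrite -{1}(submK le1) mdegD mdeg1 addn1 => [[]].
Qed.

Lemma ps_main : (1 <= n)%N ->
  corollary2p5_prop (@ps_add k n) (@ps_mul k n) (@ps_zero k n)
    (@ps_scale k n) (@ps_one k n) (@ps_deriv k n).
Proof.
move=> n1; have hl : (n.-1 < n)%N by rewrite prednK.
pose l := Ordinal hl.
exact: (@gen_thm k R n (@ps_deriv k n) (fun j => emb 'X_j) l erefl
  ps_der ps_px ps_det (@ps_nu l) (@ps_anti l erefl) ps_simp).
Qed.
End PSth.

Unset Implicit Arguments.
Theorem corollary2p5 (k : fieldType) (n : nat) :
  [pchar k] =i pred0 -> (1 <= n)%N ->
  corollary2p5_prop (@GRing.add {mpoly k[n]}) (@GRing.mul {mpoly k[n]})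
    0 (@GRing.scale k {mpoly k[n]}) 1 (fun i p => mderiv i p)
  /\
  corollary2p5_prop (@ps_add k n) (@ps_mul k n) (@ps_zero k n)
    (@ps_scale k n) (@ps_one k n) (@ps_deriv k n).
Proof.
move=> hk n1; split; [exact: mp_main | exact: ps_main].
Qed.
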